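(* Let $K$ be any field, $1\le d\le n$, $N \ge n+d$, and $I = (S_N.\,e_n^d(x_1,\dots,x_n)) \subseteq K[x_1,\dots,x_N]$. Then $$(x_1 - x_{n+1})(x_2 - x_{n+2})\cdots(x_d - x_{n+d}) \in I.$$
   Context: $e_n^d(x_1,\dots,x_n)$ denotes the elementary symmetric polynomial of degree $d$ in $x_1,\dots,x_n$; $(S_N.g)$ denotes the ideal generated by the orbit of $g$ under the permutation action of $S_N$ on the variables. *)

(* Defs.v *)
From HB Require Import structures.
From mathcomp Require Import all_boot all_order all_algebra all_fingroup.
From mathcomp Require Import multinomials.mpoly.
Set Implicit Arguments. Unset Strict Implicit. Unset Printing Implicit Defensive.
Import GRing.Theory.
Local Open Scope ring_scope.

Definition in_ideal_gen (R : comNzRingType) (G : pred R) (p : R) : Prop :=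
  exists s : seq (R * R),
    all (fun cg => cg.2 \in G) s /\ p = \sum_(cg <- s) cg.1 * cg.2.

(* The S_N-orbit of g in K[x_1..x_N], S_N acting by permuting variables
   (msym s substitutes x_i |-> x_(s i)). *)
Definition sym_orbit (N : nat) (R : comNzRingType) (g : {mpoly R[N]}) : pred {mpoly R[N]} :=
  fun q => [exists s : 'S_N, q == msym s g].

(* Variable x_(k+1) (0-based index k) of K[x_1..x_N]; 0 if k >= N (never used
   out of range below). *)
Definition xv (N : nat) (R : comNzRingType) (k : nat) : {mpoly R[N]} :=
  if insub k is Some i then 'X_i else 0.

Definition esym_first (N : nat) (R : comNzRingType) (n d : nat) : {mpoly R[N]} :=
  \sum_(h : {set 'I_N} | (h \subset [set i : 'I_N | (i < n)%N]) && (#|h| == d))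
     \prod_(i in h) 'X_i.

(* Main.v *)
Require Import Defs.
From HB Require Import structures.
From mathcomp Require Import all_boot all_order all_algebra all_fingroup.
From mathcomp Require Import multinomials.mpoly.
From mathcomp Require Import zify.
Import GRing.Theory.
Local Open Scope ring_scope.
Set Implicit Arguments. Unset Strict Implicit.

Section S.
Variables (N : nat) (R : comNzRingType).

Lemma msymXi (s : 'S_N) (i : 'I_N) : msym s ('X_i : {mpoly R[N]}) = 'X_(s i).
Proof. by rewrite /msym mmapX mmap1U. Qed.

Definition E (j : nat) (A : {set 'I_N}) : {mpoly R[N]} :=
  \sum_(h : {set 'I_N} | (h \subset A) && (#|h| == j)) \prod_(i in h) 'X_i.

Lemma msymE_set (s : 'S_N) j A : msym s (E j A) = E j (s @: A).
Proof.
rewrite /E raddf_sum /=.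
rewrite [RHS](reindex (fun h : {set 'I_N} => s @: h)) /=; last first.
  exists (fun h : {set 'I_N} => (s^-1)%g @: h) => h _; rewrite -imset_comp;
  rewrite -[RHS]imset_id; apply: eq_imset => i /=; by rewrite ?permK ?permKV.
apply: eq_big => h.
  rewrite card_imset; last exact: perm_inj.
  congr (_ && _); apply/idP/idP; first exact: imsetS.
  move=> /subsetP sub; apply/subsetP => i ih.
  have := sub (s i) (imset_f _ ih).
  by case/imsetP => i' Hi' /perm_inj ->.
move=> _; rewrite rmorph_prod /=.
rewrite big_imset /=; last by move=> a b _ _; apply: perm_inj.
by apply: eq_bigr => i _; rewrite msymXi.
Qed.

Lemma E0 (A : {set 'I_N}) : E 0 A = 1.
Proof.
rewrite /E (bigD1 set0) ?sub0set ?cards0 //= big_set0 big1 ?addr0 //.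
by move=> h /andP[/andP[_ /eqP/cards0_eq ->]]; rewrite eqxx.
Qed.

Lemma Erec j (x : 'I_N) (B : {set 'I_N}) : x \notin B ->
  E j.+1 (x |: B) = E j.+1 B + 'X_x * E j B.
Proof.
move=> xB; rewrite /E (bigID (fun h : {set 'I_N} => x \in h)) /= addrC.
congr (_ + _).
  apply: eq_bigl => h; rewrite andbAC; congr (_ && _).
  apply/idP/idP.
    case/andP=> /subsetP sub xh; apply/subsetP => i ih.
    have := sub i ih; rewrite in_setU1; case/orP=> // /eqP ei.
    by rewrite -ei ih in xh.
  move=> /subsetP sub; apply/andP; split.
    by apply/subsetP => i ih; rewrite in_setU1 sub ?orbT.
  by apply/negP => /sub; rewrite (negbTE xB).
rewrite (reindex_onto (fun h' : {set 'I_N} => x |: h') (fun h => h :\ x)) /=;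
  last by move=> h /andP[_ xh]; rewrite setD1K.
rewrite mulr_sumr; apply: eq_big => h'.
  case xh: (x \in h').
    have -> : ((x |: h') :\ x == h') = false.
      by apply/negbTE/eqP => /setP /(_ x); rewrite !inE xh eqxx.
    have -> : (h' \subset B) = false.
      by apply/negbTE/negP => /subsetP /(_ x xh); rewrite (negbTE xB).
    by rewrite !andbF.
  rewrite setU1K ?xh // eqxx setU11 !andbT cardsU1 xh add1n eqSS.
  congr (_ && _); apply/idP/idP.
    move=> /subsetP sub; apply/subsetP => i ih.
    have := sub i; rewrite !in_setU1 ih orbT => /(_ isT) /orP[/eqP ei|//].
    by rewrite -ei ih in xh.
  move=> /subsetP sub; apply/subsetP => i; rewrite !in_setU1.
  by case/orP=> [->//|/sub ->]; rewrite orbT.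
case/andP=> _ /eqP hx.
have xh : x \notin h' by rewrite -hx !inE eqxx.
by rewrite big_setU1.
Qed.

Section Ideal.
Variable g : {mpoly R[N]}.
Let J := in_ideal_gen (@sym_orbit N R g).

Lemma J_gen : J g.
Proof.
exists [:: (1, g)]; split; last by rewrite big_seq1 mul1r.
rewrite /= andbT; apply/existsP; exists 1%g; by rewrite msym1m.
Qed.

Lemma J_sub p q : J p -> J q -> J (p - q).
Proof.
move=> [s1 [a1 ->]] [s2 [a2 ->]].
exists (s1 ++ map (fun cg => (- cg.1, cg.2)) s2); split.
  by rewrite all_cat a1 /= all_map.
by rewrite big_cat big_map /= -sumrN; congr (_ + _); apply: eq_bigr => cg _; rewrite mulNr.
Qed.

Lemma J_mul c p : J p -> J (c * p).
Proof.
move=> [s1 [a1 ->]]; exists (map (fun cg => (c * cg.1, cg.2)) s1); split.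
  by rewrite all_map.
by rewrite big_map mulr_sumr; apply: eq_bigr => cg _; rewrite mulrA.
Qed.

Lemma J_sym (t : 'S_N) p : J p -> J (msym t p).
Proof.
move=> [s1 [a1 ->]]; exists (map (fun cg => (msym t cg.1, msym t cg.2)) s1); split.
  rewrite all_map; apply/allP => cg /(allP a1) /=.
  move=> /existsP [u /eqP ->]; apply/existsP; exists (u * t)%g.
  by rewrite msymMm.
by rewrite raddf_sum big_map; apply: eq_bigr => cg _ /=; rewrite -msymM.
Qed.
End Ideal.

Lemma msym_xv (s : 'S_N) j : (forall i : 'I_N, val i = j -> s i = i) ->
  msym s (@xv N R j) = xv N R j.
Proof.
rewrite /xv; case: insubP => [i _ vi|_] H; last by rewrite raddf0.
by rewrite msymXi H.
Qed.

Lemma xv_ord (i : 'I_N) : @xv N R i = 'X_i.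
Proof. by rewrite /xv valK. Qed.
End S.
Theorem mainTheorem11 (K : fieldType) (n d N : nat)
  (hd1 : (1 <= d)%N) (hdn : (d <= n)%N) (hN : (n + d <= N)%N) :
  in_ideal_gen (@sym_orbit N K (@esym_first N K n d))
    (\prod_(i < d) (@xv N K i - @xv N K (n + i))).
Proof.
set g := esym_first _ _ _ _.
suff H : forall k, (k <= d)%N -> in_ideal_gen (sym_orbit g)
  ((\prod_(i < k) (@xv N K i - @xv N K (n + i))) *
    E K (d - k) [set i : 'I_N | (k <= i < n)%N]).
  by have := H d (leqnn d); rewrite subnn E0 mulr1.
elim=> [_|k IH kd].
  rewrite big_ord0 mul1r subn0.
  have -> : [set i : 'I_N | (0 <= i < n)%N] = [set i : 'I_N | (i < n)%N].
    by apply/setP => i; rewrite !inE.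
  exact: J_gen.
have kN : (k < N)%N by lia.
have nkN : (n + k < N)%N by lia.
pose ak := Ordinal kN; pose bk := Ordinal nkN.
pose B := [set i : 'I_N | (k.+1 <= i < n)%N].
have eA : [set i : 'I_N | (k <= i < n)%N] = ak |: B.
  apply/setP => i; rewrite !inE -val_eqE /=.
  case: (ltngtP k i) => H //=.
  lia.
have akB : ak \notin B by rewrite !inE /=; lia.
have bkB : bk \notin B by rewrite !inE /=; lia.
pose t := tperm ak bk.
have eT : t @: (ak |: B) = bk |: B.
  rewrite imsetU1 tpermL; congr (_ |: _).
  rewrite -[RHS]imset_id; apply: eq_in_imset => y yB /=.
  apply: tpermD.
  - by apply/eqP => Hy; move: yB; rewrite -Hy (negbTE akB).
  - by apply/eqP => Hy; move: yB; rewrite -Hy (negbTE bkB).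
have fixP : msym t (\prod_(i < k) (@xv N K i - @xv N K (n + i))) =
    \prod_(i < k) (@xv N K i - @xv N K (n + i)).
  rewrite rmorph_prod; apply: eq_bigr => i _; rewrite rmorphB /=.
  have ik := ltn_ord i.
  rewrite !msym_xv // => j vj; apply: tpermD; apply/eqP => e;
    move: vj; rewrite -e /=; lia.
have dk : (d - k = (d - k.+1).+1)%N by lia.
have IH1 := IH (ltnW kd).
have IH2 := J_sym t IH1.
rewrite msymM fixP msymE_set eA eT in IH2.
have := J_sub IH1 IH2.
rewrite eA -mulrBr dk !Erec // big_ord_recr /= -mulrA.
rewrite (xv_ord K ak) (xv_ord K bk).
by rewrite opprD addrACA subrr add0r -mulrBl.
Qed.
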